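(* Let $V^{(1)},\dots,V^{(6)}$ be the six partitions of the set $W_2^8$ of weight-2 words of length 8 into parallel classes listed below. Then $$|\mathcal{X}(V^{(1)})|=6,\ |\mathcal{X}(V^{(2)})|=2,\ |\mathcal{X}(V^{(3)})|=2,\ |\mathcal{X}(V^{(4)})|=14,\ |\mathcal{X}(V^{(5)})|=0,\ |\mathcal{X}(V^{(6)})|=0.$$
   Context: Coordinates of $\mathbb{F}_2^8$ are indexed $0,\dots,7$; a weight-2 word is identified with its support, a pair $\{a,b\}$. $W_2^8$ is the set of all 28 words of length 8 and weight 2. A parallel class is a set of 4 weight-2 words with pairwise disjoint supports; a partition $V=\{P_1,\dots,P_7\}$ of $W_2^8$ into 7 parallel classes is considered. For $x\in\mathbb{F}_2^8$ of weight 4, a parallel class $P$ is $x$-even if every word of $P$ is orthogonal to $x$ over $\mathbb{F}_2$, and $x$-odd if no word of $P$ is orthogonal to $x$. $\mathcal{X}(V)$ is the set of all $x\in\mathbb{F}_2^8$ of weight 4 such that among $P_1,\dots,P_7$ exactly four are $x$-odd and three are $x$-even. The partitions (each class written as its four pairs): $V^{(1)}$: $\{07,16,25,34\}$, $\{17,06,35,24\}$, $\{27,36,15,04\}$, $\{37,26,05,14\}$, $\{47,56,13,02\}$, $\{57,46,03,12\}$, $\{67,45,23,01\}$. $V^{(2)}$: $\{07,26,15,34\}$, $\{17,36,05,24\}$, $\{27,06,35,14\}$, $\{37,16,25,04\}$, $\{47,56,13,02\}$, $\{57,46,03,12\}$, $\{67,45,23,01\}$. $V^{(3)}$: $\{07,26,35,14\}$,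 $\{17,36,05,24\}$, $\{27,06,15,34\}$, $\{37,16,25,04\}$, $\{47,56,03,12\}$, $\{57,46,13,02\}$, $\{67,45,23,01\}$. $V^{(4)}$: $\{07,16,35,24\}$, $\{17,06,25,34\}$, $\{27,36,15,04\}$, $\{37,26,05,14\}$, $\{47,56,13,02\}$, $\{57,46,03,12\}$, $\{67,45,23,01\}$. $V^{(5)}$: $\{07,26,15,34\}$, $\{17,56,24,03\}$, $\{27,46,05,13\}$, $\{37,16,25,04\}$, $\{47,06,35,12\}$, $\{57,36,14,02\}$, $\{67,45,23,01\}$. $V^{(6)}$: $\{07,56,34,12\}$, $\{17,26,45,03\}$, $\{27,06,35,14\}$, $\{37,46,15,02\}$, $\{47,16,05,23\}$, $\{57,36,24,01\}$, $\{67,25,04,13\}$. Here e.g. $07$ denotes the pair $\{0,7\}$. *)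

(* Defs.v *)
From mathcomp Require Import all_boot all_order all_algebra.
Set Implicit Arguments. Unset Strict Implicit. Unset Printing Implicit Defensive.
Import GRing.Theory.
Local Open Scope ring_scope.

Definition word := 'rV['F_2]_8.

Definition wt (x : word) : nat := #|[set i | x 0 i != 0]|.

Definition orth (x y : word) : bool := (\sum_(i < 8) x 0 i * y 0 i) == 0.

Definition pw (a b : nat) : word :=
  \row_(i < 8) (((i == a :> nat) || (i == b :> nat))%:R : 'F_2).

(* A parallel class is given as a list of words; a partition as a list of classes. *)
Definition x_even (x : word) (P : seq word) : bool := all (fun w => orth w x) P.
Definition x_odd (x : word) (P : seq word) : bool := all (fun w => ~~ orth w x) P.

Definition Xset (V : seq (seq word)) : {set word} :=
  [set x : word | [&& wt x == 4%N, count (x_odd x) V == 4%N & count (x_even x) V == 3%N]].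

Definition V1 : seq (seq word) :=
  [:: [:: pw 0 7; pw 1 6; pw 2 5; pw 3 4]; [:: pw 1 7; pw 0 6; pw 3 5; pw 2 4];
      [:: pw 2 7; pw 3 6; pw 1 5; pw 0 4]; [:: pw 3 7; pw 2 6; pw 0 5; pw 1 4];
      [:: pw 4 7; pw 5 6; pw 1 3; pw 0 2]; [:: pw 5 7; pw 4 6; pw 0 3; pw 1 2];
      [:: pw 6 7; pw 4 5; pw 2 3; pw 0 1]].
Definition V2 : seq (seq word) :=
  [:: [:: pw 0 7; pw 2 6; pw 1 5; pw 3 4]; [:: pw 1 7; pw 3 6; pw 0 5; pw 2 4];
      [:: pw 2 7; pw 0 6; pw 3 5; pw 1 4]; [:: pw 3 7; pw 1 6; pw 2 5; pw 0 4];
      [:: pw 4 7; pw 5 6; pw 1 3; pw 0 2]; [:: pw 5 7; pw 4 6; pw 0 3; pw 1 2];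
      [:: pw 6 7; pw 4 5; pw 2 3; pw 0 1]].
Definition V3 : seq (seq word) :=
  [:: [:: pw 0 7; pw 2 6; pw 3 5; pw 1 4]; [:: pw 1 7; pw 3 6; pw 0 5; pw 2 4];
      [:: pw 2 7; pw 0 6; pw 1 5; pw 3 4]; [:: pw 3 7; pw 1 6; pw 2 5; pw 0 4];
      [:: pw 4 7; pw 5 6; pw 0 3; pw 1 2]; [:: pw 5 7; pw 4 6; pw 1 3; pw 0 2];
      [:: pw 6 7; pw 4 5; pw 2 3; pw 0 1]].
Definition V4 : seq (seq word) :=
  [:: [:: pw 0 7; pw 1 6; pw 3 5; pw 2 4]; [:: pw 1 7; pw 0 6; pw 2 5; pw 3 4];
      [:: pw 2 7; pw 3 6; pw 1 5; pw 0 4]; [:: pw 3 7; pw 2 6; pw 0 5; pw 1 4];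
      [:: pw 4 7; pw 5 6; pw 1 3; pw 0 2]; [:: pw 5 7; pw 4 6; pw 0 3; pw 1 2];
      [:: pw 6 7; pw 4 5; pw 2 3; pw 0 1]].
Definition V5 : seq (seq word) :=
  [:: [:: pw 0 7; pw 2 6; pw 1 5; pw 3 4]; [:: pw 1 7; pw 5 6; pw 2 4; pw 0 3];
      [:: pw 2 7; pw 4 6; pw 0 5; pw 1 3]; [:: pw 3 7; pw 1 6; pw 2 5; pw 0 4];
      [:: pw 4 7; pw 0 6; pw 3 5; pw 1 2]; [:: pw 5 7; pw 3 6; pw 1 4; pw 0 2];
      [:: pw 6 7; pw 4 5; pw 2 3; pw 0 1]].
Definition V6 : seq (seq word) :=
  [:: [:: pw 0 7; pw 5 6; pw 3 4; pw 1 2]; [:: pw 1 7; pw 2 6; pw 4 5; pw 0 3];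
      [:: pw 2 7; pw 0 6; pw 3 5; pw 1 4]; [:: pw 3 7; pw 4 6; pw 1 5; pw 0 2];
      [:: pw 4 7; pw 1 6; pw 0 5; pw 2 3]; [:: pw 5 7; pw 3 6; pw 2 4; pw 0 1];
      [:: pw 6 7; pw 2 5; pw 0 4; pw 1 3]].

(* Main.v *)
Require Import Defs.
From mathcomp Require Import all_boot all_order all_algebra.
Import GRing.Theory.
Local Open Scope ring_scope.

Definition bitn (n i : nat) : bool := odd (n %/ 2 ^ i).
Definition enc (n : nat) : word := \row_(i < 8) ((bitn n i)%:R : 'F_2).

Lemma enc_nz n (i : 'I_8) : (enc n 0 i != 0) = bitn n i.
Proof. by rewrite mxE; case: bitn. Qed.

Lemma orth_enc (n a b : nat) : (a < 8)%N -> (b < 8)%N -> a != b ->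
  orth (pw a b) (enc n) = (bitn n a == bitn n b).
Proof.
move=> ha hb hab; rewrite /orth.
have ia : (inord a : 'I_8) = a :> nat by rewrite inordK.
have ib : (inord b : 'I_8) = b :> nat by rewrite inordK.
rewrite (bigD1 (inord a)) // (bigD1 (inord b)) /=; last first.
  by rewrite -(inj_eq val_inj) /= ia ib eq_sym.
rewrite big1 ?addr0; last first.
  move=> i /andP[h1 h2]; rewrite !mxE.
  have -> : ((i == a :> nat) || (i == b :> nat)) = false.
    apply/negbTE; rewrite negb_or; apply/andP; split.
      by apply: contra h1 => /eqP h; apply/eqP; apply: ord_inj; rewrite h ia.
    by apply: contra h2 => /eqP h; apply/eqP; apply: ord_inj; rewrite h ib.
  by rewrite mul0r.
rewrite !mxE ia ib !eqxx orbT (negbTE hab) !mul1r.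
by case: (bitn n a); case: (bitn n b).
Qed.

Lemma wt_enc n : wt (enc n) = count (bitn n) (iota 0 8).
Proof.
rewrite /wt -sum1_card. rewrite big_mkcond.
rewrite (eq_bigr (fun i : 'I_8 => nat_of_bool (bitn n i))); last first.
  by move=> i _; rewrite inE enc_nz; case: bitn.
rewrite !big_ord_recr big_ord0 /= add0n addn0 !addnA.
done. Qed.

Definition recon (n : nat) : nat := foldr (fun k acc => bitn n k * 2 ^ k + acc)%N 0%N (iota 0 8).

Lemma recon_id n : (n < 256)%N -> recon n = n.
Proof.
have H : all (fun n => recon n == n) (iota 0 256) by vm_compute.
by move=> hn; apply/eqP; move/allP: H; apply; rewrite mem_iota.
Qed.

Definition encO (i : 'I_256) : word := enc i.

Lemma encO_inj : injective encO.
Proof.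
move=> i j /= hij.
have hb : forall k, (k < 8)%N -> bitn i k = bitn j k.
  move=> k hk; have := congr1 (fun x : word => x 0 (inord k) != 0) hij.
  by rewrite /encO !enc_nz inordK.
apply: val_inj => /=.
rewrite -(@recon_id i (ltn_ord i)) -(@recon_id j (ltn_ord j)).
by rewrite /recon /= !hb.
Qed.

Lemma encO_bij : bijective encO.
Proof.
apply: (@inj_card_bij _ 'rV['F_2]_8 encO encO_inj).
by rewrite card_ord card_mx card_Fp.
Qed.

Definition pwp (p : nat * nat) : word := pw p.1 p.2.
Definition okp (Vp : seq (seq (nat * nat))) : bool :=
  all (all (fun p => [&& (p.1 < 8)%N, (p.2 < 8)%N & p.1 != p.2])) Vp.
Definition Pn (Vp : seq (seq (nat * nat))) (n : nat) : bool :=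
  [&& count (bitn n) (iota 0 8) == 4%N,
      count (fun c => all (fun p => bitn n p.1 != bitn n p.2) c) Vp == 4%N &
      count (fun c => all (fun p => bitn n p.1 == bitn n p.2) c) Vp == 3%N].

Lemma mem_enc Vp n : okp Vp -> (enc n \in Xset (map (map pwp) Vp)) = Pn Vp n.
Proof.
move=> /allP ok; rewrite inE wt_enc /Pn !count_map.
have E1 : count (preim (map pwp) (x_odd (enc n))) Vp =
          count (fun c => all (fun p => bitn n p.1 != bitn n p.2) c) Vp.
  apply: eq_in_count => c /ok /allP okc.
  rewrite /= /x_odd all_map; apply: eq_in_all => p /okc /and3P[h1 h2 h3] /=.
  by rewrite /pwp orth_enc.
have E2 : count (preim (map pwp) (x_even (enc n))) Vp =
          count (fun c => all (fun p => bitn n p.1 == bitn n p.2) c) Vp.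
  apply: eq_in_count => c /ok /allP okc.
  rewrite /= /x_even all_map; apply: eq_in_all => p /okc /and3P[h1 h2 h3] /=.
  by rewrite /pwp orth_enc.
by rewrite E1 E2.
Qed.

Lemma card_count Vp : okp Vp -> #|Xset (map (map pwp) Vp)| = count (Pn Vp) (iota 0 256).
Proof.
move=> ok; rewrite -sum1_card (reindex encO) /=; last first.
  by apply: onW_bij; exact: encO_bij.
rewrite (eq_bigl (fun i : 'I_256 => Pn Vp i)); last by move=> i; rewrite /encO mem_enc.
by rewrite -(big_mkord (fun i => Pn Vp i) (fun _ => 1%N)) sum1_count.
Qed.

Definition V1p : seq (seq (nat * nat)) := [:: [:: (0,7); (1,6); (2,5); (3,4)]; [:: (1,7); (0,6); (3,5); (2,4)]; [:: (2,7); (3,6); (1,5); (0,4)]; [:: (3,7); (2,6); (0,5); (1,4)]; [:: (4,7); (5,6); (1,3); (0,2)]; [:: (5,7); (4,6); (0,3); (1,2)]; [:: (6,7); (4,5); (2,3); (0,1)]].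
Lemma V1E : V1 = map (map pwp) V1p. Proof. by []. Qed.
Definition V2p : seq (seq (nat * nat)) := [:: [:: (0,7); (2,6); (1,5); (3,4)]; [:: (1,7); (3,6); (0,5); (2,4)]; [:: (2,7); (0,6); (3,5); (1,4)]; [:: (3,7); (1,6); (2,5); (0,4)]; [:: (4,7); (5,6); (1,3); (0,2)]; [:: (5,7); (4,6); (0,3); (1,2)]; [:: (6,7); (4,5); (2,3); (0,1)]].
Lemma V2E : V2 = map (map pwp) V2p. Proof. by []. Qed.
Definition V3p : seq (seq (nat * nat)) := [:: [:: (0,7); (2,6); (3,5); (1,4)]; [:: (1,7); (3,6); (0,5); (2,4)]; [:: (2,7); (0,6); (1,5); (3,4)]; [:: (3,7); (1,6); (2,5); (0,4)]; [:: (4,7); (5,6); (0,3); (1,2)]; [:: (5,7); (4,6); (1,3); (0,2)]; [:: (6,7); (4,5); (2,3); (0,1)]].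
Lemma V3E : V3 = map (map pwp) V3p. Proof. by []. Qed.
Definition V4p : seq (seq (nat * nat)) := [:: [:: (0,7); (1,6); (3,5); (2,4)]; [:: (1,7); (0,6); (2,5); (3,4)]; [:: (2,7); (3,6); (1,5); (0,4)]; [:: (3,7); (2,6); (0,5); (1,4)]; [:: (4,7); (5,6); (1,3); (0,2)]; [:: (5,7); (4,6); (0,3); (1,2)]; [:: (6,7); (4,5); (2,3); (0,1)]].
Lemma V4E : V4 = map (map pwp) V4p. Proof. by []. Qed.
Definition V5p : seq (seq (nat * nat)) := [:: [:: (0,7); (2,6); (1,5); (3,4)]; [:: (1,7); (5,6); (2,4); (0,3)]; [:: (2,7); (4,6); (0,5); (1,3)]; [:: (3,7); (1,6); (2,5); (0,4)]; [:: (4,7); (0,6); (3,5); (1,2)]; [:: (5,7); (3,6); (1,4); (0,2)]; [:: (6,7); (4,5); (2,3); (0,1)]].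
Lemma V5E : V5 = map (map pwp) V5p. Proof. by []. Qed.
Definition V6p : seq (seq (nat * nat)) := [:: [:: (0,7); (5,6); (3,4); (1,2)]; [:: (1,7); (2,6); (4,5); (0,3)]; [:: (2,7); (0,6); (3,5); (1,4)]; [:: (3,7); (4,6); (1,5); (0,2)]; [:: (4,7); (1,6); (0,5); (2,3)]; [:: (5,7); (3,6); (2,4); (0,1)]; [:: (6,7); (2,5); (0,4); (1,3)]].
Lemma V6E : V6 = map (map pwp) V6p. Proof. by []. Qed.

Lemma card_of {Vp V k} : V = map (map pwp) Vp -> okp Vp -> count (Pn Vp) (iota 0 256) = k -> #|Xset V| = k.
Proof. by move=> -> ok <-; apply: card_count. Qed.

Theorem lemma3 :
  #|Xset V1| = 6%N /\ #|Xset V2| = 2%N /\ #|Xset V3| = 2%N /\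
  #|Xset V4| = 14%N /\ #|Xset V5| = 0%N /\ #|Xset V6| = 0%N.
Proof.
split; [apply: (card_of V1E); vm_compute; reflexivity|].
split; [apply: (card_of V2E); vm_compute; reflexivity|].
split; [apply: (card_of V3E); vm_compute; reflexivity|].
split; [apply: (card_of V4E); vm_compute; reflexivity|].
split; [apply: (card_of V5E); vm_compute; reflexivity|].
apply: (card_of V6E); vm_compute; reflexivity.
Qed.
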